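(* Let $\mathcal{A}$ be an automaton over $\Sigma$. Then there exists an automaton $\mathcal{B}$ over $\Sigma$ such that $\mathfrak{J}_{\exists\boxplus}(\mathcal{B})=\mathfrak{J}(\mathcal{A})$.
   Context: Automata are nondeterministic B\''uchi automata over infinite words; $\mathfrak{L}(\mathcal{A})$ is the accepted language. For $w\in\Sigma^\omega$, $\Psi(w)\in\mathbb{N}_\infty^\Sigma$ gives the number of occurrences of each letter ($\infty$ if infinite); for finite $x$, $\Psi(x)\in\mathbb{N}^\Sigma$. $w\sim w'$ iff $\Psi(w)=\Psi(w')$; $\mathfrak{J}(\mathcal{A})=\{w:\exists w'\sim w,\ w'\in\mathfrak{L}(\mathcal{A})\}$. For $k\ge1$, $w\sim_{k\boxplus}w'$ means $w=x_1x_2\cdots$, $w'=y_1y_2\cdots$ with $|x_i|=|y_i|=k$ and $\Psi(x_i)=\Psi(y_i)$. $\mathfrak{J}_{\exists\boxplus}(\mathcal{A})=\{w\in\Sigma^\omega:\exists k\ge1\ \exists w'\sim_{k\boxplus}w,\ w'\in\mathfrak{L}(\mathcal{A})\}$. *)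

(* Defs.v *)
From mathcomp Require Import all_boot.
Set Implicit Arguments. Unset Strict Implicit. Unset Printing Implicit Defensive.

Definition oword (Sigma : Type) := nat -> Sigma.

Unset Implicit Arguments.
Record automaton (Sigma : finType) := Automaton {
  state : finType;
  init : pred state;
  trans : state -> Sigma -> state -> bool;
  acc : pred state
}.
Set Implicit Arguments.
Arguments state {Sigma}.
Arguments init {Sigma}.
Arguments trans {Sigma}.
Arguments acc {Sigma}.

Definition accepting_run (Sigma : finType) (A : automaton Sigma)
  (w : oword Sigma) (r : nat -> state A) : Prop :=
  init A (r 0) /\
  (forall i, trans A (r i) (w i) (r i.+1)) /\
  (forall n, exists i, n <= i /\ acc A (r i)).

Arguments accepting_run {Sigma} A w r.

Definition accepts (Sigma : finType) (A : automaton Sigma) (w : oword Sigma) : Prop :=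
  exists r, accepting_run A w r.

Definition occ (Sigma : finType) (w : oword Sigma) (a : Sigma) (m k : nat) : nat :=
  \sum_(j < k) (w (m + j) == a).

(* Psi(w)(a) = v, with v : option nat, None standing for infinity:
   Some n  : a occurs exactly n times in w;
   None    : a occurs infinitely often in w. *)
Definition parikh_is (Sigma : finType) (w : oword Sigma) (a : Sigma)
  (v : option nat) : Prop :=
  match v with
  | Some n => exists N, forall M, N <= M -> occ w a 0 M = n
  | None => forall n, exists M, n < occ w a 0 M
  end.

Definition parikh_equiv (Sigma : finType) (w w' : oword Sigma) : Prop :=
  forall a : Sigma, exists v, parikh_is w a v /\ parikh_is w' a v.

Definition block_equiv (Sigma : finType) (k : nat) (w w' : oword Sigma) : Prop :=
  forall i (a : Sigma), occ w a (i * k) k = occ w' a (i * k) k.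

Definition J (Sigma : finType) (A : automaton Sigma) (w : oword Sigma) : Prop :=
  exists w', parikh_equiv w w' /\ accepts A w'.

Definition J_ex_box (Sigma : finType) (A : automaton Sigma) (w : oword Sigma) : Prop :=
  exists k, 1 <= k /\ exists w', block_equiv k w w' /\ accepts A w'.

(* Main.v *)
Require Import Defs.
From mathcomp Require Import all_boot.
From Stdlib Require Import ClassicalEpsilon Classical.
Set Implicit Arguments. Unset Strict Implicit.

Section Occ.
Variable Sigma : finType.
Implicit Types (f g : oword Sigma) (a : Sigma).

Lemma occS f a m k : occ f a m k.+1 = occ f a m k + (f (m + k) == a).
Proof. by rewrite /occ big_ord_recr. Qed.

Lemma occ0 f a m : occ f a m 0 = 0.
Proof. by rewrite /occ big_ord0. Qed.

Lemma occ_add f a M d : occ f a 0 (M + d) = occ f a 0 M + occ f a M d.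
Proof.
elim: d => [|d IH]; first by rewrite addn0 occ0 addn0.
by rewrite addnS !occS IH add0n addnA.
Qed.

Lemma occ_mono f a M M' : M <= M' -> occ f a 0 M <= occ f a 0 M'.
Proof. move=> /subnKC <-; rewrite occ_add; exact: leq_addr. Qed.

Lemma occ_ext f g a m k : (forall j, j < k -> f (m + j) = g (m + j)) ->
  occ f a m k = occ g a m k.
Proof. move=> H; apply: eq_bigr => j _; by rewrite H. Qed.

Lemma occ_zero f a m k : (forall j, j < k -> f (m + j) != a) -> occ f a m k = 0.
Proof. move=> H; apply: big1 => j _; by rewrite (negbTE (H j (ltn_ord j))). Qed.

Lemma occ_pos f a m k : 0 < occ f a m k -> exists j, j < k /\ f (m + j) = a.
Proof.
move=> Hp; apply: NNPP => Hn; move: Hp; rewrite occ_zero //.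
move=> j Hj; apply/eqP => E; apply: Hn; by exists j.
Qed.

Lemma occ_seq f a m k : occ f a m k = count_mem a [seq f (m + j) | j <- iota 0 k].
Proof.
elim: k => [|k IH]; first by rewrite occ0.
rewrite occS IH -addn1 iotaD map_cat count_cat /= add0n addn0.
by rewrite eq_sym.
Qed.

Lemma inf_unb f a : (forall n, exists i, n <= i /\ f i = a) ->
  forall n, exists M, n < occ f a 0 M.
Proof.
move=> H; elim=> [|n [M HM]].
  have [i [_ Hi]] := H 0; exists i.+1; by rewrite occS Hi eqxx addn1.
have [i [Hi Hfi]] := H M; exists i.+1.
rewrite occS Hfi eqxx addn1 ltnS; apply: leq_trans HM _; exact: occ_mono.
Qed.

Lemma unb_inf f a : (forall n, exists M, n < occ f a 0 M) ->
  forall n, exists i, n <= i /\ f i = a.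
Proof.
move=> H n; have [M HM] := H (occ f a 0 n).
have HnM : n <= M.
  rewrite leqNgt; apply/negP => HMn; move: HM; rewrite ltnNge occ_mono //; exact: ltnW.
move: HM; rewrite -(subnKC HnM) occ_add -{1}(addn0 (occ f a 0 n)) ltn_add2l.
move/occ_pos => [j [_ Hj]]; exists (n + j); split => //; exact: leq_addr.
Qed.

Lemma occ_blocks f g a k : (forall i, occ f a (i * k) k = occ g a (i * k) k) ->
  forall i, occ f a 0 (i * k) = occ g a 0 (i * k).
Proof.
move=> H; elim=> [|i IH]; first by rewrite mul0n !occ0.
by rewrite mulSn addnC !occ_add IH H.
Qed.

Lemma parikh_transfer f g a v k : 0 < k ->
  (forall i, occ f a (i * k) k = occ g a (i * k) k) ->
  parikh_is g a v -> parikh_is f a v.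
Proof.
move=> Hk H; have HB := occ_blocks H; case: v => [n|] /=.
- move=> [N HN]; exists (N * k) => M HM.
  have H1 : N <= M %/ k by rewrite leq_divRL.
  have H2 : N <= (M %/ k).+1 * k.
    apply: leq_trans (leq_pmulr _ Hk); exact: leq_trans H1 (leqnSn _).
  apply/eqP; rewrite eqn_leq; apply/andP; split.
  + apply: leq_trans (occ_mono f a (ltnW (ltn_ceil M Hk))) _.
    by rewrite HB HN // ; exact: leq_trans H2.
  + rewrite -(HN (M %/ k * k)); last by apply: leq_trans H1 (leq_pmulr _ Hk).
    rewrite -HB; apply: occ_mono; exact: leq_trunc_div.
- move=> Hu n; have [M HM] := Hu n; exists (M * k).
  rewrite HB; apply: leq_trans HM _; apply: occ_mono; exact: leq_pmulr.
Qed.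

Lemma fin_max (l : seq Sigma) (P : Sigma -> nat -> Prop) :
  (forall a n n', n <= n' -> P a n -> P a n') ->
  (forall a, a \in l -> exists n, P a n) -> exists n, forall a, a \in l -> P a n.
Proof.
move=> Hm; elim: l => [|b l IH] H; first by exists 0.
have [n1 Hn1] := H b (mem_head _ _).
have [n2 Hn2] : exists n, forall a, a \in l -> P a n.
  apply: IH => a Ha; apply: H; by rewrite inE Ha orbT.
exists (maxn n1 n2) => a; rewrite inE => /orP [/eqP ->|Ha].
  apply: Hm Hn1; exact: leq_maxl.
apply: Hm (Hn2 a Ha); exact: leq_maxr.
Qed.

End Occ.

Definition asb (P : Prop) : bool := if excluded_middle_informative P then true else false.
Lemma asbP (P : Prop) : asb P <-> P.
Proof. rewrite /asb; case: excluded_middle_informative => //. Qed.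

Fixpoint remall (T : eqType) (p s : seq T) : seq T :=
  match p with [::] => s | a :: p' => remall p' (rem a s) end.

Lemma remallP (T : eqType) (p s : seq T) :
  (forall a, count_mem a p <= count_mem a s) -> perm_eq (p ++ remall p s) s.
Proof.
elim: p s => [|a p IH] s H /=; first exact: perm_refl.
have Ha : a \in s.
  rewrite -has_pred1 has_count; apply: leq_trans (H a); by rewrite /= eqxx.
apply: (@perm_trans _ (a :: rem a s)); last by rewrite perm_sym; exact: perm_to_rem.
rewrite perm_cons; apply: IH => b; rewrite count_mem_rem.
have := H b; rewrite /= eq_sym; case: eqP => [->|_] /=; last by rewrite subn0.
by rewrite add1n => Hb; rewrite leq_subRL ?add1n // -has_count has_pred1.
Qed.

Section Constr.
Variable Sigma : finType.
Variable A : automaton Sigma.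

Definition good (S : {set Sigma}) (q : state A) : Prop :=
  exists (z : oword Sigma) (rz : nat -> state A), rz 0 = q /\
    (forall i, trans A (rz i) (z i) (rz i.+1)) /\
    (forall n, exists i, n <= i /\ acc A (rz i)) /\
    (forall i, z i \in S) /\
    (forall s, s \in S -> forall n, exists i, n <= i /\ z i = s).

Definition Bst : finType := (state A + ({set Sigma} * {set Sigma}))%type.

Definition Binit (s : Bst) : bool := if s is inl q then init A q else false.
Definition Bacc (s : Bst) : bool := if s is inr (S0, T) then T == S0 else false.
Definition Btrans (s : Bst) (a : Sigma) (s' : Bst) : bool :=
  match s, s' with
  | inl q, inl q' => trans A q a q'
  | inl q, inr (S0, T) => asb (good S0 q) && (a \in S0) && (T == [set a])
  | inr (S0, T), inr (S1, T') =>
      (S1 == S0) && (a \in S0) && (T' == if T == S0 then [set a] else a |: T)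
  | inr _, inl _ => false
  end.

Definition B : automaton Sigma := @Automaton Sigma Bst Binit Btrans Bacc.

Lemma fwd (w : oword Sigma) : J_ex_box B w -> J A w.
Proof.
move=> [k [Hk [x [Hbe [R [HR0 [HRt HRa]]]]]]].
case E0: (R 0) => [q0|p0]; last by rewrite E0 in HR0.
pose isR (s : Bst) := if s is inr _ then true else false.
have exR : exists j, isR (R j).
  have [j [_ Hj]] := HRa 0; exists j; move: Hj; by case: (R j).
case: (ex_minnP exR) => m Hm Hmin.
have m_gt0 : 0 < m by move: Hm; case: m {Hmin} => //; rewrite E0.
pose N := m.-1.
have HmN : m = N.+1 by rewrite prednK.
pose ra i := if R i is inl q then q else q0.
have Hinl : forall i, i < m -> R i = inl (ra i).
  move=> i Hi; rewrite /ra; case E: (R i) => [q|p] //.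
  have := Hmin i; rewrite E => /(_ isT); by rewrite leqNgt Hi.
pose SS i := if R i is inr (S0, _) then S0 else set0.
pose TT i := if R i is inr (_, T) then T else set0.
have Hinr : forall d, R (m + d) = inr (SS m, TT (m + d)).
  elim=> [|d IH].
    rewrite addn0 /SS /TT; move: Hm; by case: (R m) => // [[S0 T]].
  have := HRt (m + d); rewrite IH addnS /= /Btrans.
  case E: (R (m + d).+1) => [q|[S' T']] //= /andP [/andP [/eqP HS _] _].
  by rewrite /TT E HS.
have Hinr' : forall i, m <= i -> R i = inr (SS m, TT i).
  move=> i Hi; rewrite -(subnKC Hi); exact: Hinr.
have Hstep : forall i, m <= i -> (x i \in SS m) /\
    TT i.+1 = if TT i == SS m then [set x i] else x i |: TT i.
  move=> i Hi; have := HRt i; rewrite Hinr' // Hinr' ?(leqW Hi) //= /Btrans.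
  by move=> /andP [/andP [_ ->] /eqP ->].
have Hsw : good (SS m) (ra N) /\ x N \in SS m.
  have := HRt N; rewrite Hinl ?HmN // -HmN (Hinr' m (leqnn _)) /= /Btrans.
  by move=> /andP [/andP [/asbP H1 ->] _].
have Hlet : forall i, N <= i -> x i \in SS m.
  move=> i; rewrite leq_eqVlt => /orP [/eqP <-|Hi]; first by case: Hsw.
  by case: (Hstep i); rewrite ?HmN.
have HTacc : forall n, exists i, n <= i /\ m <= i /\ TT i == SS m.
  move=> n; have [i [Hi Ha]] := HRa (maxn n m).
  exists i; rewrite geq_max in Hi; case/andP: Hi => Hi1 Hi2; do 2!split => //.
  by move: Ha; rewrite Hinr'.
have Hinf : forall s, s \in SS m -> forall n, exists i, n <= i /\ x i = s.
  move=> s Hs n; apply: NNPP => Hn.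
  have Hne : forall i, n <= i -> x i != s.
    move=> i Hi; apply/eqP => E; apply: Hn; by exists i.
  have [i1 [H1 [H1m H1a]]] := HTacc n.
  have Hs' : forall d, s \notin TT (i1 + d.+1).
    elim=> [|d IH].
      rewrite addn1; case: (Hstep i1 H1m) => _ ->; rewrite H1a inE eq_sym; exact: Hne.
    rewrite addnS; case: (Hstep (i1 + d.+1)); first exact: leq_trans H1m (leq_addr _ _).
    move=> _ ->; case: ifP => _; rewrite ?inE ?in_setU1 eq_sym.
      apply: Hne; exact: leq_trans H1 (leq_addr _ _).
    rewrite negb_or IH andbT; apply: Hne; exact: leq_trans H1 (leq_addr _ _).
  have [i2 [H2 [_ H2a]]] := HTacc i1.+1.
  move: (Hs' (i2 - i1.+1)); by rewrite addnS -addSn subnKC // (eqP H2a) Hs.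
case: Hsw => [[z [rz [Hrz0 [Hrzt [Hrza [Hzin Hzinf]]]]]] _].
pose u i := if i < N then x i else z (i - N).
pose ru i := if i <= N then ra i else rz (i - N).
exists u; split; last first.
  exists ru; split; [|split].
  - by rewrite /ru leq0n; move: HR0; rewrite Hinl.
  - move=> i; rewrite /ru /u; case: (ltngtP i N) => Hi.
    + have := HRt i.
      by rewrite Hinl ?HmN 1?ltnW // Hinl ?HmN.
    + rewrite subSn ?(ltnW Hi) //; exact: Hrzt.
    + rewrite Hi subSn // subnn -Hrz0; exact: Hrzt.
  - move=> n; have [j [Hj Ha]] := Hrza n; exists (N + j); split.
      exact: leq_trans Hj (leq_addl _ _).
    rewrite /ru; case: ifP => H.
      have Ej : j = 0 by move: H; rewrite -{2}(addn0 N) leq_add2l; case: j {Hj Ha}.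
      by rewrite Ej addn0 -Hrz0 -Ej.
    by rewrite addKn.
have HbeI : forall a i, occ w a (i * k) k = occ x a (i * k) k by move=> a i; apply: Hbe.
move=> a; case: (boolP (a \in SS m)) => Ha.
- exists None; split.
    apply: (parikh_transfer Hk (HbeI a)); exact: inf_unb (Hinf a Ha).
  apply: inf_unb => n; have [j [Hj Hzj]] := Hzinf a Ha n.
  exists (N + j); split; first exact: leq_trans Hj (leq_addl _ _).
  by rewrite /u ltnNge leq_addr /= addKn.
- exists (Some (occ x a 0 N)); split.
    apply: (parikh_transfer Hk (HbeI a)); exists N => M HM.
    rewrite -(subnKC HM) occ_add (@occ_zero _ x a N) ?addn0 // => j _.
    apply/eqP => E; move: Ha; rewrite -E Hlet //; exact: leq_addr.
  exists N => M HM; rewrite -(subnKC HM) occ_add (@occ_zero _ u a N) ?addn0.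
    apply: occ_ext => j Hj; by rewrite /u add0n Hj.
  move=> j _; rewrite /u ltnNge leq_addr /= addKn.
  apply/eqP => E; move: Ha; by rewrite -E Hzin.
Qed.

End Constr.

Fixpoint tseq (Sigma : finType) (S : {set Sigma}) (f : nat -> Sigma) (n : nat) : {set Sigma} :=
  match n with
  | 0 => S
  | n'.+1 => if tseq S f n' == S then [set f n'] else f n' |: tseq S f n'
  end.

Lemma bwd (Sigma : finType) (A : automaton Sigma) (w : oword Sigma) :
  J A w -> J_ex_box (B A) w.
Proof.
move=> [u [Hpe [r [Hr0 [Hrt Hra]]]]].
pose inS a := forall n, exists M, n < occ u a 0 M.
pose S := [set a | asb (inS a)].
have HS : forall a, (a \in S) <-> inS a by move=> a; rewrite inE; exact: asbP.
have Hw_unb : forall a, a \in S -> forall n, exists M, n < occ w a 0 M.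
  move=> a /HS Hu; have [v [Hw Hu']] := Hpe a.
  case: v Hw Hu' => [n|] /= Hw Hu'; last exact: Hw.
  exfalso; case: Hu' => N HN; have [M HM] := Hu n.
  move: HM; rewrite -(HN (maxn M N)) ?leq_maxr // ltnNge occ_mono //.
  exact: leq_maxl.
have Hfin : forall a, a \notin S -> exists n N, forall M, N <= M ->
    occ u a 0 M = n /\ occ w a 0 M = n.
  move=> a Ha; have [v [Hw Hu']] := Hpe a; case: v Hw Hu' => [n|] /=.
  - move=> [N1 H1] [N2 H2]; exists n, (maxn N1 N2) => M.
    rewrite geq_max => /andP [? ?]; split; [exact: H2 | exact: H1].
  - move=> _ Hu'; have := proj2 (HS a) Hu'; by rewrite (negbTE Ha).
have [N0 HN0] : exists N, forall a, a \in enum Sigma -> (a \notin S ->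
    exists n, forall M, N <= M -> occ u a 0 M = n /\ occ w a 0 M = n).
  apply: fin_max.
    move=> a n n' Hnn' H Ha; have [c Hc] := H Ha; exists c => M HM.
    apply: Hc; exact: leq_trans Hnn' HM.
  move=> a _; case: (boolP (a \in S)) => Ha; first by exists 0.
  have [n [N HN]] := Hfin a Ha; exists N => _; by exists n.
have HN0' : forall a, a \notin S -> forall M, N0 <= M ->
    occ u a 0 M = occ u a 0 N0 /\ occ w a 0 M = occ u a 0 N0.
  move=> a Ha M HM; have [n Hn] := HN0 a (mem_enum _ _) Ha.
  rewrite (proj1 (Hn N0 (leqnn _))); exact: Hn.
have HuS : forall M, N0 <= M -> u M \in S.
  move=> M HM; apply/negPn/negP => Ha.
  have [H1 _] := HN0' _ Ha M.+1 (leqW HM); have [H2 _] := HN0' _ Ha M HM.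
  move: H1; rewrite occS H2 eqxx addn1 => /esym; exact: n_Sn.
have HwS : forall M, N0 <= M -> w M \in S.
  move=> M HM; apply/negPn/negP => Ha.
  have [_ H1] := HN0' _ Ha M.+1 (leqW HM); have [_ H2] := HN0' _ Ha M HM.
  move: H1; rewrite occS H2 eqxx addn1 => /esym; exact: n_Sn.
have Huinf : forall a, a \in S -> forall n, exists i, n <= i /\ u i = a.
  move=> a /HS; exact: unb_inf.
have Hwinf : forall a, a \in S -> forall n, exists i, n <= i /\ w i = a.
  move=> a /Hw_unb; exact: unb_inf.
have [K0 HK0] : exists K, forall a, a \in enum Sigma ->
    (a \in S -> occ u a 0 N0 <= occ w a 0 K).
  apply: fin_max.
    move=> a n n' Hnn' H Ha; apply: leq_trans (H Ha) _; exact: occ_mono.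
  move=> a _; case: (boolP (a \in S)) => Ha; last by exists 0.
  have [M HM] := Hw_unb a Ha (occ u a 0 N0); exists M => _; exact: ltnW.
pose k := maxn (maxn K0 N0) 1.
have Hk1 : 0 < k by rewrite leq_maxr.
have HkN : N0 <= k by rewrite !leq_max leqnn orbT.
have HkK : K0 <= k by rewrite !leq_max leqnn.
have Hcnt : forall a, occ u a 0 N0 <= occ w a 0 k /\
    (a \notin S -> occ w a 0 k = occ u a 0 N0).
  move=> a; case: (boolP (a \in S)) => Ha.
    split=> //; apply: leq_trans (HK0 a (mem_enum _ _) Ha) _; exact: occ_mono.
  by rewrite (proj2 (HN0' a Ha k HkN)).
pose p := [seq u (0 + j) | j <- iota 0 N0].
pose wb := [seq w (0 + j) | j <- iota 0 k].
pose rm := remall p wb.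
pose blk := p ++ rm.
have Hperm : perm_eq blk wb.
  apply: remallP => a; rewrite /p /wb -!occ_seq; exact: (Hcnt a).1.
have Hsz : size blk = k by rewrite (perm_size Hperm) size_map size_iota.
have Hszp : size p = N0 by rewrite size_map size_iota.
pose w' i := if i < k then nth (w 0) blk i else w i.
have Hw'u : forall i, i < N0 -> w' i = u i.
  move=> i Hi; have Hik : i < k := leq_trans Hi HkN.
  rewrite /w' Hik nth_cat Hszp Hi (nth_map 0) ?size_iota // nth_iota //.
have Hw'S : forall i, N0 <= i -> w' i \in S.
  move=> i Hi; rewrite /w'; case: ifP => Hik; last exact: HwS.
  rewrite nth_cat Hszp ltnNge Hi /=; set a := nth _ _ _.
  apply/negPn/negP => Ha.
  have Hin : a \in rm.
    apply: mem_nth; rewrite -(ltn_add2l N0) subnKC // -Hszp -size_cat.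
    by rewrite -/blk Hsz.
  have := permP Hperm (pred1 a); rewrite count_cat.
  rewrite /p /wb -!occ_seq (proj2 (Hcnt a) Ha) -{2}(addn0 (occ u a 0 N0)).
  move/addnI => /eqP; apply/negP; rewrite -lt0n -has_count has_pred1; exact: Hin.
have Hbe : block_equiv k w w'.
  move=> [|i] a.
    rewrite mul0n !occ_seq.
    have -> : [seq w' (0 + j) | j <- iota 0 k] = blk.
      rewrite -{1}(mkseq_nth (w 0) blk) Hsz /mkseq; apply/eq_in_map => j.
      by rewrite mem_iota add0n => /andP [_ Hj]; rewrite /w' Hj.
    by rewrite (permP Hperm).
  apply: occ_ext => j Hj; rewrite /w' ifF //.
  by rewrite mulSn -addnA ltnNge leq_addr.
pose f n := w' (N0 + n).
have Hf : forall n, f n \in S by move=> n; apply: Hw'S; exact: leq_addr.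
have Htsub : forall m, tseq S f m \subset S.
  elim=> [|m IH] /=; first exact: subxx.
  case: ifP => _; apply/subsetP => b.
    by rewrite inE => /eqP ->.
  rewrite in_setU1 => /orP [/eqP ->|]; [exact: Hf | exact: (subsetP IH)].
have Hfinf : forall s, s \in S -> forall n, exists j, n <= j /\ f j = s.
  move=> s Hs n; have [i [Hi Hwi]] := Hwinf s Hs (maxn k (N0 + n)).
  rewrite geq_max in Hi; case/andP: Hi => Hik HiN.
  exists (i - N0); split; first by rewrite leq_subRL // (leq_trans _ HiN) ?leq_addr.
  rewrite /f subnKC; last by apply: leq_trans HiN; exact: leq_addr.
  by rewrite /w' ltnNge Hik.
have Htinf : forall n, exists m, n <= m /\ tseq S f m == S.
  move=> n; apply: NNPP => Hn.
  have Hne : forall m, n <= m -> tseq S f m != S.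
    move=> m Hm; apply/negP => E; apply: Hn; by exists m.
  have Hgrow : forall d j, j < d -> f (n + j) \in tseq S f (n + d).
    elim=> [|d IH] j //= Hj; rewrite addnS /= (negbTE (Hne _ (leq_addr _ _))).
    rewrite in_setU1; rewrite ltnS leq_eqVlt in Hj.
    case/orP: Hj => [/eqP ->|Hj]; first by rewrite eqxx.
    by rewrite IH ?orbT.
  have [D HD] : exists D, forall s, s \in enum Sigma -> (s \in S ->
      exists j, j < D /\ f (n + j) = s).
    apply: fin_max.
      move=> s d d' Hd H Hs; have [j [Hj Hfj]] := H Hs; exists j; split=> //.
      exact: leq_trans Hj Hd.
    move=> s _; case: (boolP (s \in S)) => Hs; last by exists 0.
    have [i [Hi Hfi]] := Hfinf s Hs n; exists (i - n).+1 => _.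
    by exists (i - n); rewrite subnKC.
  apply: (negP (Hne (n + D) (leq_addr _ _))); rewrite eqEsubset Htsub andTb.
  apply/subsetP => s Hs; have [j [Hj <-]] := HD s (mem_enum _ _) Hs; exact: Hgrow.
have Hgood : good S (r N0).
  exists (fun j => u (N0 + j)), (fun j => r (N0 + j)); split; first by rewrite addn0.
  split; first by move=> i; rewrite addnS; exact: Hrt.
  split.
    move=> n; have [i [Hi Ha]] := Hra (N0 + n); exists (i - N0).
    rewrite subnKC ?(leq_trans _ Hi) ?leq_addr //; split=> //.
    by rewrite leq_subRL // (leq_trans _ Hi) ?leq_addr.
  split; first by move=> i; apply: HuS; exact: leq_addr.
  move=> s Hs n; have [i [Hi Hui]] := Huinf s Hs (N0 + n); exists (i - N0).
  rewrite subnKC ?(leq_trans _ Hi) ?leq_addr //; split=> //.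
  by rewrite leq_subRL // (leq_trans _ Hi) ?leq_addr.
pose R i : Bst A := if i <= N0 then inl (r i) else inr (S, tseq S f (i - N0)).
exists k; split=> //; exists w'; split=> //; exists R; split; [|split].
- by rewrite /R leq0n.
- move=> i; rewrite /R; case: (ltngtP i N0) => Hi /=.
  + by rewrite /Btrans Hw'u.
  + rewrite /Btrans subSn ?(ltnW Hi) //= eqxx Hw'S ?(ltnW Hi) //=.
    by rewrite /f subnKC ?(ltnW Hi).
  + rewrite /Btrans Hi subSn // subnn /= eqxx /f addn0 Hw'S // eqxx !andbT.
    by apply/asbP.
- move=> n; have [m [Hm Htm]] := Htinf n.+1; exists (N0 + m); split.
    apply: leq_trans (ltnW Hm) (leq_addl _ _).
  rewrite /R; case: ifP => H.
    by move: H Hm; rewrite -{2}(addn0 N0) leq_add2l; case: m {Htm}.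
  by rewrite /= addKn.
Qed.

Theorem theorem4 (Sigma : finType) (A : automaton Sigma) :
  exists B : automaton Sigma, forall w : oword Sigma, J_ex_box B w <-> J A w.
Proof.
exists (B A) => w; split; [exact: fwd | exact: bwd].
Qed.
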